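(* For all $i,n\ge1$, $b_i(\mathcal{A}_n)<\frac{2^{in}}{i!}$. Consequently, for all $n>1$, the number $R_n$ of chambers of $\mathcal{A}_n$ satisfies $\log_2(R_n)<n^2-n+1$.
   Context: For $n\ge1$, the resonance arrangement $\mathcal{A}_n$ is the arrangement in $\mathbb{R}^n$ of the hyperplanes $H_I=\{x:\sum_{i\in I}x_i=0\}$ for all nonempty $I\subseteq[n]$. For an arrangement $\mathcal{A}$ in $\mathbb{R}^n$, its characteristic polynomial is $\chi(\mathcal{A};t)=\sum_{S\subseteq\mathcal{A}}(-1)^{|S|}t^{r(\mathcal{A})-r(S)}$ where $r(S)=\operatorname{codim}\bigcap_{H\in S}H$, and the $i$-th Betti number $b_i(\mathcal{A})$ is the absolute value of the coefficient of $t^{n-i}$ in $\chi(\mathcal{A};t)$. $R_n$ is the number of chambers (connected components of $\mathbb{R}^n\setminus\bigcup_{H\in\mathcal{A}_n}H$) of $\mathcal{A}_n$. *)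

(* Defs.v *)
From HB Require Import structures.
From mathcomp Require Import all_boot all_order all_algebra.
From mathcomp Require Import all_classical all_reals all_analysis.
Set Implicit Arguments. Unset Strict Implicit. Unset Printing Implicit Defensive.
Import Order.TTheory GRing.Theory Num.Theory.
Import numFieldNormedType.Exports.

Local Open Scope ring_scope.

(* Hyperplanes of the resonance arrangement A_n are indexed by nonempty
   I : {set 'I_n}; H_I = {x | \sum_(i in I) x_i = 0}. *)

Definition res_normal (n : nat) (I : {set 'I_n}) : 'rV[rat]_n :=
  \row_(j < n) (j \in I)%:R.

(* r(S) = codim of the intersection of the hyperplanes in S
   = dimension of the span of their normal vectors. *)
Definition res_rank (n : nat) (S : {set {set 'I_n}}) : nat :=
  \rank (\sum_(I in S) <<res_normal I>>)%MS.

Definition res_hyps (n : nat) : {set {set 'I_n}} := [set I | I != finset.set0].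

Definition res_charpoly (n : nat) : {poly int} :=
  \sum_(S : {set {set 'I_n}} | S \subset res_hyps n)
     ((-1) ^+ #|S|) *: 'X^(res_rank (res_hyps n) - res_rank S).

Definition res_betti (n i : nat) : nat :=
  if (i <= n)%N then absz ((res_charpoly n)`_(n - i)) else 0%N.

Local Open Scope classical_set_scope.

Definition res_complement (R : realType) (n : nat) : set 'rV[R]_n :=
  [set x | forall I : {set 'I_n}, I != finset.set0 -> (\sum_(j in I) x ord0 j)%R != 0%R].

Definition res_chambers (R : realType) (n : nat) : set (set 'rV[R]_n) :=
  [set connected_component (@res_complement R n) x | x in @res_complement R n].

(* Main.v *)
Require Import Defs.
From HB Require Import structures.
From mathcomp Require Import all_boot all_order all_algebra.
From mathcomp Require Import all_classical all_reals all_analysis.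
Import Order.TTheory GRing.Theory Num.Theory.
Import numFieldNormedType.Exports.
From mathcomp Require Import zify ring lra.
Set Implicit Arguments. Unset Strict Implicit. Unset Printing Implicit Defensive.
Local Open Scope ring_scope.


Section P1.
Variable n : nat.
Local Notation T := {set 'I_n}.
Local Notation v := (@res_normal n).
Definition sp (S : {set T}) := (\sum_(I in S) <<v I>>)%MS.

Lemma res_rankE S : res_rank S = \rank (sp S). Proof. by []. Qed.

Lemma sp_mono (S S' : {set T}) : S \subset S' -> (sp S <= sp S')%MS.
Proof.
move=> sub; apply/sumsmx_subP => I IS.
by apply: (sumsmx_sup I); [exact: (fintype.subsetP sub)|].
Qed.

Lemma v_sp (S : {set T}) I : I \in S -> (v I <= sp S)%MS.
Proof. by move=> IS; apply: (sumsmx_sup I); [exact: IS|rewrite genmxE]. Qed.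

Lemma sp_setU1 (S : {set T}) h : h \notin S -> (sp (h |: S) :=: <<v h>> + sp S)%MS.
Proof. by move=> hS; rewrite /sp big_setU1. Qed.

Lemma rank_setU1_in (S : {set T}) h : (v h <= sp S)%MS ->
  \rank (sp (h |: S)) = \rank (sp S).
Proof.
move=> hS; case: (boolP (h \in S)) => hin; first have -> : h |: S = S by apply/finset.setUidPr; rewrite finset.sub1set.
  by [].
rewrite (eqmx_rank (introT eqmxP (sp_setU1 hin))); apply: eqmx_rank; apply/eqmxP; apply/addsmx_idPr.
by rewrite genmxE.
Qed.

Lemma rank_setU1_out (S : {set T}) h : v h != 0 -> ~~ (v h <= sp S)%MS ->
  \rank (sp (h |: S)) = (\rank (sp S)).+1.
Proof.
move=> nz hS; have hin : h \notin S by apply: contra hS; apply: v_sp.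
rewrite (eqmx_rank (introT eqmxP (sp_setU1 hin))).
have r1 : \rank (<<v h>>)%MS = 1%N by rewrite mxrank_gen rank_rV nz.
have cap0 : \rank (<<v h>> :&: sp S)%MS = 0%N.
  have [le eqc] := mxrank_leqif_sup (capmxSl (<<v h>>)%MS (sp S)).
  move: le; rewrite r1 leq_eqVlt ltnS leqn0 => /orP[/eqP e|/eqP //].
  exfalso; move/negP: hS; apply.
  have : (<<v h>> <= <<v h>> :&: sp S)%MS by rewrite -eqc r1 e.
  move/submx_trans => /(_ _ _ (capmxSr _ _)).
  by rewrite genmxE.
have := mxrank_sum_cap (<<v h>>)%MS (sp S).
by rewrite r1 cap0 addn0 add1n.
Qed.


Definition gtS (S : {set T}) (h : T) := [set g in S | (enum_rank h < enum_rank g)%N].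
Definition Dset (S : {set T}) := [set h in res_hyps n | (v h <= sp (gtS S h))%MS].
Definition tog (S : {set T}) h := if h \in S then S :\ h else h |: S.

Lemma setD1_notin (Y : {set T}) h : h \notin Y -> Y :\ h = Y.
Proof.
move=> hY; apply/setP => x; rewrite !inE; case: eqP => // ->.
by rewrite (negbTE hY).
Qed.

Lemma sp_tog (Y : {set T}) h : (v h <= sp (Y :\ h))%MS -> (sp (tog Y h) == sp Y)%MS.
Proof.
move=> hY; rewrite /tog; case: ifP => hin.
  suff: (sp (Y :\ h) == sp (h |: (Y :\ h)))%MS by rewrite finset.setD1K.
  apply/eqmxP; apply: eqmx_sym.
  apply: eqmx_trans (sp_setU1 _) _; first by rewrite !inE eqxx.
  by apply/addsmx_idPr; rewrite genmxE.
rewrite setD1_notin ?hin // in hY.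
apply/eqmxP; apply: eqmx_trans (sp_setU1 _) _; first by rewrite hin.
by apply/addsmx_idPr; rewrite genmxE.
Qed.

Lemma gtS_sub (S : {set T}) h : gtS S h \subset S :\ h.
Proof.
apply/fintype.subsetP => g; rewrite !inE => /andP[gS lt]; rewrite gS andbT.
by apply: contraTneq lt => ->; rewrite ltnn.
Qed.

Lemma DsetP (S : {set T}) h : h \in Dset S -> (v h <= sp (S :\ h))%MS.
Proof.
rewrite inE => /andP[_ hs]; apply: submx_trans hs _; apply: sp_mono; exact: gtS_sub.
Qed.

Lemma rank_tog (S : {set T}) h : h \in Dset S -> res_rank (tog S h) = res_rank S.
Proof. by move=> hD; apply: eqmx_rank; apply: sp_tog; apply: DsetP. Qed.

Lemma gtS_tog (S : {set T}) h g : (enum_rank g >= enum_rank h)%N ->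
  gtS (tog S h) g = gtS S g.
Proof.
move=> le; apply/setP => x; rewrite !inE /tog.
case: (boolP (x == h)) => [/eqP ->|xh].
  by rewrite ltnNge le !andbF.
by case: ifP => _; rewrite !inE ?(negbTE xh).
Qed.

Lemma gtS_tog2 (S : {set T}) h g : (enum_rank g < enum_rank h)%N ->
  gtS (tog S h) g = tog (gtS S g) h.
Proof.
move=> lt; apply/setP => x; rewrite /tog !inE lt andbT.
case: (boolP (h \in S)) => hS; rewrite !inE.
  case: (boolP (x == h)) => [/eqP ->|xh] //=.
case: (boolP (x == h)) => [/eqP ->|xh] //=; by rewrite lt.
Qed.

Lemma Dset_tog (S : {set T}) h : h \in Dset S -> Dset (tog S h) = Dset S.
Proof.
move=> hD; apply/setP => g; rewrite !inE.
case: (leqP (enum_rank h) (enum_rank g)) => [le|lt]; first by rewrite gtS_tog.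
rewrite gtS_tog2 //.
have hs : (v h <= sp (gtS S g :\ h))%MS.
  move: hD; rewrite inE => /andP[_ hs]; apply: submx_trans hs _; apply: sp_mono.
  apply/fintype.subsetP => x; rewrite !inE => /andP[xS ltx]; rewrite xS.
  rewrite (ltn_trans lt ltx) !andbT.
  by apply: contraTneq ltx => ->; rewrite ltnn.
by have /eqmxP e := sp_tog hs; rewrite e.
Qed.

Definition phi (S : {set T}) :=
  if [pick h in Dset S] is Some h then tog S h else S.

Lemma togK (S : {set T}) h : tog (tog S h) h = S.
Proof.
rewrite /tog; case: (boolP (h \in S)) => hS.
  by rewrite !inE eqxx /= finset.setD1K.
by rewrite !inE eqxx /= setU1K.
Qed.

Lemma phiK : involutive phi.
Proof.
move=> S; rewrite {2}/phi; case E: [pick h in Dset S] => [h|]; last by rewrite /phi E.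
have hD : h \in Dset S by move: E; case: pickP => // x hx [<-].
by rewrite /phi Dset_tog // E togK.
Qed.


Lemma vnz h : h \in res_hyps n -> v h != 0.
Proof.
rewrite inE => /set0Pn [j hj]; apply/eqP => /matrixP /(_ ord0 j).
by rewrite !mxE hj => /eqP; rewrite oner_eq0.
Qed.

Lemma phi_some (S : {set T}) : Dset S != finset.set0 -> exists2 h, h \in Dset S & phi S = tog S h.
Proof.
move=> /set0Pn [x xD]; rewrite /phi; case: pickP => [h hD|/(_ x)]; last by rewrite xD.
by exists h.
Qed.

Lemma tog_sub (S : {set T}) h : h \in res_hyps n -> S \subset res_hyps n ->
  tog S h \subset res_hyps n.
Proof.
move=> hH sS; rewrite /tog; case: ifP => _.
  by apply: fintype.subset_trans sS; apply: subsetDl.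
by rewrite finset.subUset finset.sub1set hH.
Qed.

Lemma tog_card (S : {set T}) h : (-1) ^+ #|tog S h| = - (-1) ^+ #|S| :> int.
Proof.
rewrite /tog; case: (boolP (h \in S)) => hS.
  by rewrite [in RHS](cardsD1 h S) hS add1n exprS mulN1r opprK.
by rewrite cardsU1 hS add1n exprS mulN1r.
Qed.

Definition Qc i (S : {set T}) :=
  [&& S \subset res_hyps n, res_rank S == i & Dset S != finset.set0].

Lemma Qc_phi i S : Qc i S -> Qc i (phi S).
Proof.
case/and3P => sS rS dS; have [h hD ->] := phi_some dS.
have hH : h \in res_hyps n by move: hD; rewrite inE => /andP[].
by rewrite /Qc tog_sub // rank_tog // Dset_tog // rS dS.
Qed.

Lemma sum_cancel i :
  \sum_(S | Qc i S) (-1) ^+ #|S| = 0 :> int.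
Proof.
set X := \sum_(S | Qc i S) _.
have : X = - X.
  rewrite {1}/X (reindex_inj (can_inj phiK)) /=.
  rewrite -sumrN; apply: eq_big => S.
    apply/idP/idP; last exact: Qc_phi.
    by move=> /Qc_phi; rewrite (phiK S).
  move=> /Qc_phi; rewrite (phiK S) => /and3P[_ _ dS].
  have [h hD ->] := phi_some dS; exact: tog_card.
move=> e; have : X + X = 0 by rewrite {1}e addNr.
by rewrite -mulr2n => /eqP; rewrite mulrn_eq0 /= => /eqP.
Qed.

Lemma indep_loc (S : {set T}) : S \subset res_hyps n ->
  (forall h, h \in S -> ~~ (v h <= sp (gtS S h))%MS) ->
  res_rank S = #|S|.
Proof.
move: {2}#|S| (erefl #|S|) => k; elim: k S => [|k IH] S cS sS loc.
  have -> : S = finset.set0 by apply/eqP; rewrite -cards_eq0 cS.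
  by rewrite /res_rank /sp big_set0 mxrank0 cards0.
have [m0 m0S] : exists m0, m0 \in S.
  by apply/set0Pn; rewrite -card_gt0 cS.
case: (@arg_minnP _ m0 (mem S) (fun x => nat_of_ord (enum_rank x)) m0S) => m mS mmin.
have {}mS : m \in S by [].
have eS : S :\ m = gtS S m.
  apply/setP => x; rewrite !inE; case: (boolP (x == m)) => [/eqP ->|xm] /=.
    by rewrite ltnn andbF.
  case: (boolP (x \in S)) => xS //=; rewrite ltn_neqAle mmin // andbT.
  apply/esym/negP => /eqP /val_inj /enum_rank_inj em; by rewrite em eqxx in xm.
have mH : m \in res_hyps n by apply: (fintype.subsetP sS).
have nmD : ~~ (v m <= sp (S :\ m))%MS by rewrite eS; apply: loc.
rewrite /res_rank -(finset.setD1K mS) (rank_setU1_out (vnz mH) nmD).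
have -> : #|m |: (S :\ m)| = #|S| by rewrite finset.setD1K.
have cD : #|S :\ m| = k by move: cS; rewrite (cardsD1 m S) mS add1n => -[].
rewrite cS -/(res_rank _) IH ?cD //.
- by apply: fintype.subset_trans sS; apply: subsetDl.
move=> g; rewrite !inE => /andP[gm gS].
have -> : gtS (S :\ m) g = gtS S g.
  apply/setP => y; rewrite !inE; case: (boolP (y == m)) => [/eqP ->|//] /=.
  by rewrite mS ltnNge mmin.
exact: loc.
Qed.

Lemma indep (S : {set T}) : S \subset res_hyps n -> Dset S = finset.set0 ->
  res_rank S = #|S|.
Proof.
move=> sS dS; apply: indep_loc => // h hS; apply/negP => hD.
have : h \in Dset S by rewrite inE (fintype.subsetP sS) // hD.
by rewrite dS inE.
Qed.

Lemma rank_hyps : res_rank (res_hyps n) = n.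
Proof.
apply/eqP; rewrite eqn_leq rank_leq_col /=.
have : row_full (sp (res_hyps n)).
  rewrite -sub1mx; apply/row_subP => j; rewrite row1.
  have -> : delta_mx 0 j = v [set j].
    apply/matrixP => a b; rewrite !mxE !inE [a]ord1 eqxx /= eq_sym //.
  apply: v_sp; rewrite inE; apply/set0Pn; exists j; exact: set11.
by rewrite /row_full res_rankE => /eqP ->.
Qed.

Lemma ffact_le_exp N M k : (N <= M)%N -> (N ^_ k <= M ^ k)%N.
Proof.
elim: k N => [|k IH] N le; first by [].
case: N le => [|N] le; first by rewrite ffact0n.
by rewrite ffactSS expnS leq_mul // IH // ltnW.
Qed.


Lemma card_hyps : #|res_hyps n| = (2 ^ n)%N.-1.
Proof.
have := cardsC [set finset.set0 : T]; rewrite cards1.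
have -> : ~: [set finset.set0 : T] = res_hyps n by apply/setP => x; rewrite !inE.
have -> : #|{: T}| = (2 ^ n)%N by rewrite -cardsT -powersetT card_powerset cardsT card_ord.
by move=> <-; rewrite add1n.
Qed.

Lemma betti_le i : (i <= n)%N -> (res_betti n i <= 'C((2 ^ n)%N.-1, i))%N.
Proof.
move=> le; rewrite /res_betti le /res_charpoly coef_sumMXn rank_hyps.
set c := \sum_(_ | _) _.
have -> : c = \sum_(S : {set T} | (S \subset res_hyps n) && (res_rank S == i)) (-1) ^+ #|S|.
  apply: eq_bigl => S; congr (_ && _).
  have := rank_leq_col (sp S); rewrite -res_rankE => rl.
  by apply/eqP/eqP; lia.
rewrite (bigID (fun S => Dset S == finset.set0)) /=.
have -> : \sum_(S : {set T} | (S \subset res_hyps n) && (res_rank S == i) && ~~ (Dset S == finset.set0))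
    (-1) ^+ #|S| = 0 :> int.
  by rewrite -(sum_cancel i); apply: eq_bigl => S; rewrite /Qc andbA.
rewrite addr0 -card_hyps -cards_draws.
have : `|\sum_(S : {set T} | (S \subset res_hyps n) && (res_rank S == i) && (Dset S == finset.set0))
    ((-1) ^+ #|S| : int)| <= (#|[set A : {set T} | A \subset res_hyps n & #|A| == i]|)%:R.
  apply: le_trans (ler_norm_sum _ _ _) _.
  under eq_bigr do rewrite normrX normrN1 expr1n.
  rewrite sumr_const ler_nat; apply: subset_leq_card.
  apply/fintype.subsetP => S; rewrite unfold_in => /andP[/andP[sS /eqP rS] /eqP dS].
  by rewrite inE sS -rS (indep sS dS) eqxx.
by move=> h; rewrite -lez_nat abszE -natz.
Qed.


Lemma part1 i : (1 <= i)%N ->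
  ((res_betti n i)%:R < (2 ^ (i * n))%:R / (i`!)%:R :> rat).
Proof.
move=> i1; rewrite ltr_pdivlMr ?ltr0n ?fact_gt0 // -natrM ltr_nat.
case: (leqP i n) => [le|lt]; last by rewrite /res_betti ifN ?mul0n ?expn_gt0 // -ltnNge.
apply: leq_ltn_trans (leq_mul (betti_le le) (leqnn _)) _.
rewrite bin_ffact; apply: leq_ltn_trans (ffact_le_exp _ (leqnn _)) _.
by rewrite mulnC expnM ltn_exp2r // ltn_predL expn_gt0.
Qed.
End P1.

Section Pajor.
Local Open Scope nat_scope.
Variable U : finType.

Definition shattered (F : {set {set U}}) (A : {set U}) :=
  [forall B : {set U}, (B \subset A) ==> [exists X in F, X :&: A == B]].

Definition Sh (F : {set {set U}}) := [set A | shattered F A].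

Lemma Sh_mono (F G : {set {set U}}) : F \subset G -> Sh F \subset Sh G.
Proof.
move=> FG; apply/fintype.subsetP => A; rewrite !inE => /forallP sh.
apply/forallP => B; apply/implyP => BA; have /existsP [X /andP[XF e]] := implyP (sh B) BA.
by apply/existsP; exists X; rewrite (fintype.subsetP FG).
Qed.

Lemma Sh0_notin (F : {set {set U}}) x A : (forall X, X \in F -> x \notin X) ->
  A \in Sh F -> x \notin A.
Proof.
move=> Fx; rewrite inE => /forallP /(_ A); rewrite fintype.subxx /= => /existsP [X /andP[XF /eqP e]].
apply/negP => xA; have : x \in X :&: A by rewrite e.
by rewrite inE (negbTE (Fx X XF)).
Qed.

Lemma Sh1_notin (F : {set {set U}}) x A : (forall X, X \in F -> x \in X) ->
  A \in Sh F -> x \notin A.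
Proof.
move=> Fx; rewrite inE => /forallP /(_ (A :\ x)); rewrite subD1set /= => /existsP [X /andP[XF /eqP e]].
apply/negP => xA; have : x \in X :&: A by rewrite inE Fx.
by rewrite e !inE eqxx.
Qed.

Lemma Sh_U1 (F : {set {set U}}) x A : A \in Sh [set X in F | x \notin X] ->
  A \in Sh [set X in F | x \in X] -> x |: A \in Sh F.
Proof.
rewrite !inE => /forallP sh0 /forallP sh1; apply/forallP => B; apply/implyP => BA.
case: (boolP (x \in B)) => xB.
  have BA' : B :\ x \subset A.
    apply/fintype.subsetP => y; rewrite !inE => /andP[yx yB].
    by move: (fintype.subsetP BA y yB); rewrite !inE (negbTE yx).
  have /existsP [X /andP[]] := implyP (sh1 (B :\ x)) BA'.
  rewrite inE => /andP[XF xX] /eqP e; apply/existsP; exists X; rewrite XF /=.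
  apply/eqP/setP => y; rewrite !inE; case: (boolP (y == x)) => [/eqP ->|yx] /=.
    by rewrite xX xB.
  by move/setP: e => /(_ y); rewrite !inE yx.
have BA' : B \subset A.
  apply/fintype.subsetP => y yB.
  move: (fintype.subsetP BA y yB); rewrite !inE; case/orP => // /eqP yx.
  by rewrite -yx yB in xB.
have /existsP [X /andP[]] := implyP (sh0 B) BA'.
rewrite inE => /andP[XF xX] /eqP e; apply/existsP; exists X; rewrite XF /=.
apply/eqP/setP => y; rewrite !inE; case: (boolP (y == x)) => [/eqP ->|yx] /=.
  by rewrite (negbTE xX) (negbTE xB).
by move/setP: e => /(_ y); rewrite !inE.
Qed.

Lemma pajor (F : {set {set U}}) : #|F| <= #|Sh F|.
Proof.
move: {2}#|F|.+1 (ltnSn #|F|) => k; elim: k F => // k IH F lt.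
case: (leqP #|F| 1) => [le1|gt1].
  case: (posnP #|F|) => [-> //|pos].
  have : #|F| == 1 by rewrite eqn_leq le1 pos.
  case/cards1P => X ->; rewrite cards1 card_gt0; apply/set0Pn; exists finset.set0.
  rewrite inE; apply/forallP => B; apply/implyP; rewrite finset.subset0 => /eqP ->.
  by apply/existsP; exists X; rewrite set11 finset.setI0 eqxx.
have [X XF] : exists X, X \in F by apply/set0Pn; rewrite -card_gt0 ltnW.
have [Y /andP[YF YX]] : exists Y, (Y \in F) && (Y != X).
  apply/existsP; apply: contraTT gt1 => /existsPn h; rewrite -leqNgt.
  apply: leq_trans (_ : #|[set X]| <= 1); last by rewrite cards1.
  apply: subset_leq_card; apply/fintype.subsetP => Z ZF; rewrite inE.
  by move: (h Z); rewrite ZF /= negbK.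
have [x xXY] : exists x, (x \in X) != (x \in Y).
  apply/existsP; apply: contraNT YX => /existsPn h; apply/eqP/setP => y.
  by move: (h y); rewrite negbK => /eqP.
pose F1 := [set Z in F | x \in Z]; pose F0 := [set Z in F | x \notin Z].
have cF : #|F1| + #|F0| = #|F|.
  rewrite -(cardsID [set Z : {set U} | x \in Z] F); by congr (_ + _); apply: eq_card => Z; rewrite !inE andbC.
have ne1 : 0 < #|F1|.
  rewrite card_gt0; apply/set0Pn; case: (boolP (x \in X)) => xX.
    by exists X; rewrite inE XF.
  by exists Y; rewrite inE YF; move: xXY; rewrite (negbTE xX); case: (x \in Y).
have ne0 : 0 < #|F0|.
  rewrite card_gt0; apply/set0Pn; case: (boolP (x \in X)) => xX.
    by exists Y; rewrite inE YF; move: xXY; rewrite xX; case: (x \in Y).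
  by exists X; rewrite inE XF.
have IH1 : #|F1| <= #|Sh F1| by apply: IH; move: cF ne0 ne1 lt; lia.
have IH0 : #|F0| <= #|Sh F0| by apply: IH; move: cF ne0 ne1 lt; lia.
have n0 : forall A, A \in Sh F0 -> x \notin A.
  by move=> A; apply: Sh0_notin => Z; rewrite inE => /andP[].
have n1 : forall A, A \in Sh F1 -> x \notin A.
  by move=> A; apply: Sh1_notin => Z; rewrite inE => /andP[].
pose G := (Sh F0 :|: Sh F1) :|: [set x |: A | A in Sh F0 :&: Sh F1].
have GS : G \subset Sh F.
  rewrite !finset.subUset !Sh_mono ?andbT /=; first last.
  - by apply/fintype.subsetP => Z; rewrite inE => /andP[].
  - by apply/fintype.subsetP => Z; rewrite inE => /andP[].
  apply/fintype.subsetP => B /imsetP [A]; rewrite inE => /andP[A0 A1] ->.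
  exact: Sh_U1.
have dis : (Sh F0 :|: Sh F1) :&: [set x |: A | A in Sh F0 :&: Sh F1] = finset.set0.
  apply/setP => B; rewrite finset.in_set0 finset.in_setI finset.in_setU; apply/negP => /andP[/orP BS /imsetP [A _ eB]].
  have xB : x \in B by rewrite eB setU11.
  by case: BS => BS; [move: (n0 _ BS)|move: (n1 _ BS)]; rewrite xB.
have cimg : #|[set x |: A | A in Sh F0 :&: Sh F1]| = #|Sh F0 :&: Sh F1|.
  apply: card_in_imset => A A'; rewrite !finset.in_setI => /andP[A0 _] /andP[A'0 _] e.
  by rewrite -(setU1K (n0 _ A0)) e setU1K // n0.
have := cardsUI (Sh F0 :|: Sh F1) [set x |: A | A in Sh F0 :&: Sh F1].
rewrite dis cards0 addn0 cimg => eG.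
have := cardsUI (Sh F0) (Sh F1).
have := subset_leq_card GS.
rewrite /G; lia.
Qed.

End Pajor.

Section Num.
Local Open Scope nat_scope.

Lemma ffact_le_exp' N M k : N <= M -> N ^_ k <= M ^ k.
Proof.
elim: k N => [|k IH] N le; first by [].
case: N le => [|N] le; first by rewrite ffact0n.
by rewrite ffactSS expnS leq_mul // IH // ltnW.
Qed.

Lemma binfact_le n k : 'C((2 ^ n).-1, k) * k`! <= 2 ^ (n * k).
Proof. by rewrite bin_ffact expnM; apply: ffact_le_exp'; rewrite leq_pred. Qed.

Lemma double_le_exp n : 2 * n <= 2 ^ n.
Proof.
case: n => [|n] //; rewrite expnS leq_mul2l /=.
by have := ltn_expl n (ltnSn 1).
Qed.

Lemma partial_sum n m : m <= n ->
  (\sum_(k < m.+1) 'C((2 ^ n).-1, k)) * m`! <= 2 * 2 ^ (n * m).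
Proof.
elim: m => [|m IH] le.
  by rewrite big_ord_recr big_ord0 /= bin0 muln0.
rewrite big_ord_recr /= factS mulnDl.
have h1 := IH (ltnW le).
have h2 := binfact_le n m.+1.
have h3 : 2 * m.+1 <= 2 ^ n by apply: leq_trans (double_le_exp n); rewrite leq_mul2l.
have -> : 2 ^ (n * m.+1) = 2 ^ (n * m) * 2 ^ n by rewrite mulnS expnD mulnC.
rewrite factS in h2.
rewrite mulnS expnD mulnC in h2.
move: h1 h2 h3.
set S := \sum_(_ < _) _; set C := 'C(_, _); set f := m`!; set P := 2 ^ (n * m); set Q := 2 ^ n.
move=> h1 h2 h3.
have h4 : S * f * m.+1 <= 2 * P * m.+1 by rewrite leq_mul2r h1 orbT.
have h5 : 2 * m.+1 * P <= Q * P by rewrite leq_mul2r h3 orbT.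
nia.
Qed.


Lemma fact_gt_exp n : 3 < n -> 2 ^ n < n`!.
Proof.
elim: n => // n IH; rewrite ltnS leq_eqVlt => /orP[/eqP <-|lt] //.
rewrite expnS factS; apply: leq_ltn_trans (leq_mul (_ : 2 <= n.+1) (leqnn _)) _.
  by lia.
by rewrite ltn_mul2l /= IH.
Qed.

Lemma num_bound n : 1 < n -> \sum_(k < n.+1) 'C((2 ^ n).-1, k) < 2 ^ (n ^ 2 - n + 1).
Proof.
case: n => [|[|[|[|n]]]] // _.
- by rewrite !big_ord_recr big_ord0.
- by rewrite !big_ord_recr big_ord0.
set m := n.+4.
have h := partial_sum (leqnn m).
have hf := fact_gt_exp (isT : 3 < m).
have e : 2 * 2 ^ (m * m) = 2 ^ (m ^ 2 - m + 1) * 2 ^ m.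
  rewrite -expnS -expnD; congr (2 ^ _); rewrite -mulnn; nia.
rewrite e in h; move: h hf.
set S := \sum_(_ < _) _; set X := 2 ^ (m ^ 2 - m + 1); set q := 2 ^ m; set f := m`!.
have Xp : 0 < X by rewrite expn_gt0.
move=> h hf; nia.
Qed.


Lemma card_small (U : finType) (H : {set U}) m :
  #|[set S : {set U} | (S \subset H) && (#|S| <= m)]| = \sum_(k < m.+1) 'C(#|H|, k).
Proof.
rewrite -sum1_card big_mkcond /=.
rewrite [RHS](eq_bigr (fun k : 'I_m.+1 => \sum_(S : {set U})
   (if S \in [set A : {set U} | A \subset H & #|A| == k] then 1 else 0))); last first.
  by move=> k _; rewrite -cards_draws -sum1_card big_mkcond.
rewrite exchange_big /=; apply: eq_bigr => S _.
rewrite inE; case: (boolP ((S \subset H) && (#|S| <= m))) => [/andP[SH Sm]|nS].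
  rewrite (bigD1 (Ordinal (Sm : #|S| < m.+1))) /=; last by [].
  rewrite inE SH eqxx big1 ?addn0 // => k kn; rewrite inE SH /=.
  case: eqP => // e; move: kn; suff -> : k = Ordinal (Sm : #|S| < m.+1) by rewrite eqxx.
  by apply/val_inj; rewrite /= e.
rewrite big1 // => k _; rewrite inE; case: (boolP (S \subset H)) => //= SH.
case: eqP => // e; move: nS; by rewrite SH e -ltnS ltn_ord.
Qed.
End Num.

Section P2.
Local Open Scope classical_set_scope.
Variable R : realType.
Variable n : nat.
Local Notation T := {set 'I_n}.
Local Notation V := 'rV[R]_n.

Definition lin (I : T) (x : V) : R := \sum_(j in I) x ord0 j.

Lemma lin_continuous I : continuous (lin I).
Proof.
rewrite /lin; elim: (index_enum _) => [|j s IH].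
  under eq_fun do rewrite big_nil; exact: cst_continuous.
under eq_fun do rewrite big_cons.
case: (j \in I).
  move=> x; apply: continuousD; [exact: coord_continuous | exact: IH].
exact: IH.
Qed.

Lemma lin_seg I (x y : V) t : lin I (x + t *: (y - x)) = lin I x + t * (lin I y - lin I x).
Proof.
rewrite /lin (eq_bigr (fun j => x ord0 j + t * (y ord0 j - x ord0 j))); last first.
  by move=> j _; rewrite !mxE.
by rewrite big_split /= -mulr_sumr sumrB.
Qed.

Lemma seg_continuous (x y : V) : continuous (fun t : R => x + t *: (y - x)).
Proof.
move=> t; apply: (@continuousD _ _ _ (fun=> x) (fun t : R => t *: (y - x))).
  exact: cst_continuous.
by apply: continuousZr_tmp.
Qed.


Definition pat (x : V) : {set T} := [set I in res_hyps n | 0 < lin I x].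
Local Notation A := (@res_complement R n).

Lemma compl_lin x I : A x -> I != finset.set0 -> lin I x != 0.
Proof. by move=> Ax hI; apply: Ax. Qed.

Lemma comp_sign x I a b : connected_component A x a -> connected_component A x b ->
  I != finset.set0 -> 0 < lin I a -> lin I b < 0 -> False.
Proof.
move=> Ca Cb hI pa nb.
have cC := @component_connected _ A x.
have cI : connected (lin I @` connected_component A x).
  apply: connected_continuous_connected => //.
  exact/continuous_subspaceT/lin_continuous.
have /connected_intervalP iI := cI.
have : (lin I @` connected_component A x) 0.
  apply: (iI (lin I b) (lin I a)); [by exists b|by exists a|].
  by rewrite (ltW nb) (ltW pa).
case=> z Cz z0.
have Az := connected_component_sub Cz.
by move: (compl_lin Az hI); rewrite z0 eqxx.
Qed.

Lemma comp_pat x y : connected_component A x y -> pat y = pat x.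
Proof.
move=> Cy.
have Cx : connected_component A x x.
  apply: connected_component_refl.
  exact: (connected_component_sub (connected_component_sym Cy)).
have Ay := connected_component_sub Cy.
have Ax := connected_component_sub Cx.
apply/setP => I; rewrite !inE; case: (boolP (I == finset.set0)) => //= hI.
have ny := compl_lin Ay hI; have nx := compl_lin Ax hI.
case: (ltrgtP 0 (lin I y)) => hy; case: (ltrgtP 0 (lin I x)) => hx //.
- by case: (comp_sign Cy Cx hI hy hx).
- by move: nx; rewrite -hx eqxx.
- by case: (comp_sign Cx Cy hI hx hy).
- by move: ny; rewrite -hy eqxx.
Qed.

Lemma seg_comp x y : A x -> A y -> pat x = pat y -> connected_component A x y.
Proof.
move=> Ax Ay pxy.
pose g := fun t : R => x + t *: (y - x).
pose S := g @` [set t : R | 0 <= t <= 1].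
have Sy : S y by exists 1; [rewrite /= ler01 lexx | rewrite /g scale1r addrC subrK].
apply: (@connected_component_max _ _ S) Sy.
- by exists 0; [rewrite /= lexx ler01 | rewrite /g scale0r addr0].
- move=> _ [t /andP[t0 t1] <-] I hI; rewrite -/(lin I _) /g lin_seg.
  have nx := compl_lin Ax hI; have ny := compl_lin Ay hI.
  have e : (0 < lin I x) = (0 < lin I y).
    by move/setP: pxy => /(_ I); rewrite !inE hI.
  case: (ltrgtP 0 (lin I x)) e => hx e.
  + have hy : 0 < lin I y by rewrite -e.
    apply/negP => /eqP h0; clear -t0 t1 hx hy h0; nra.
  + have hy : lin I y < 0 by rewrite lt_neqAle ny /= leNgt -e.
    apply/negP => /eqP h0; clear -t0 t1 hx hy h0; nra.
  + by move: nx; rewrite -hx eqxx.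
- apply: connected_continuous_connected.
    apply/connected_intervalP => a b /andP[a0 a1] /andP[b0 b1] z /andP[az zb].
    apply/andP; split; [exact: le_trans az | exact: le_trans zb _].
  exact/continuous_subspaceT/seg_continuous.
Qed.

Lemma linE I (x : V) : lin I x = \sum_j ratr ((res_normal I) ord0 j) * x ord0 j.
Proof.
rewrite /lin [RHS](bigID (fun j => j \in I)) /= [X in _ = _ + X]big1 ?addr0.
  by apply: eq_bigr => j jI; rewrite mxE jI rmorph1 mul1r.
by move=> j /negbTE jI; rewrite mxE jI rmorph0 mul0r.
Qed.

Lemma lin_comb (h : T) (G : {set T}) : (res_normal h <= sp G)%MS ->
  exists c : T -> rat, forall x : V, lin h x = \sum_(I in G) ratr (c I) * lin I x.
Proof.
case/sub_sumsmxP => u e.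
have : forall I, exists a : rat, u I *m <<res_normal I>>%MS = a *: res_normal I.
  move=> I; apply/sub_rVP; apply: submx_trans (submxMl _ _) _; by rewrite genmxE.
case/fin_all_exists => c hc; exists c => x.
have e' : res_normal h = \sum_(I in G) c I *: res_normal I.
  by rewrite e; apply: eq_bigr => I _; exact: hc.
rewrite linE e'.
under eq_bigr do rewrite summxE rmorph_sum mulr_suml.
rewrite exchange_big /=; apply: eq_bigr => I _.
rewrite linE mulr_sumr; apply: eq_bigr => j _.
by rewrite !mxE rmorphM mulrA.
Qed.

Definition Fpat : {set {set T}} := [set P | `[< exists x, A x /\ pat x = P >]].

Lemma FpatP P : reflect (exists x, A x /\ pat x = P) (P \in Fpat).
Proof. by rewrite inE; exact: asboolP. Qed.

Lemma Sh_bound A0 : A0 \in Sh Fpat -> (A0 \subset res_hyps n) && (#|A0| <= n)%N.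
Proof.
move=> sh.
have sub : A0 \subset res_hyps n.
  move: (sh); rewrite inE => /forallP /(_ A0); rewrite fintype.subxx /=.
  case/existsP => X /andP[/FpatP [x [Ax px]] /eqP e].
  apply/fintype.subsetP => y yA; have : y \in X :&: A0 by rewrite e.
  by rewrite -px !inE => /andP[/andP[]].
rewrite sub /= leqNgt; apply/negP => big.
have [h hA hsp] : exists2 h, h \in A0 & (res_normal h <= sp (gtS A0 h))%MS.
  apply/exists_inP; apply: contraT => /exists_inPn loc.
  have := indep_loc sub loc.
  have := rank_leq_col (sp A0); rewrite -res_rankE => le e.
  by move: big; rewrite -e ltnNge le.
have [c hc] := lin_comb hsp.
pose B := [set I in gtS A0 h | 0 < c I].
have BA : B \subset A0.
  by apply/fintype.subsetP => I; rewrite !inE => /andP[/andP[]].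
move: (sh); rewrite inE => /forallP /(_ B); rewrite BA /=.
case/existsP => X /andP[/FpatP [x [Ax px]] /eqP e].
have mem I : I \in A0 -> (0 < lin I x) = (I \in B).
  move=> IA; rewrite -e !inE IA andbT -px inE.
  by rewrite (fintype.subsetP sub I IA).
have hH : h \in res_hyps n by rewrite (fintype.subsetP sub).
have hneg : lin h x < 0.
  have nz : lin h x != 0 by apply: Ax; move: hH; rewrite inE.
  by rewrite lt_neqAle nz /= leNgt mem // !inE ltnn andbF.
have : 0 <= \sum_(I in gtS A0 h) ratr (c I) * lin I x.
  apply: sumr_ge0 => I IG.
  have IA : I \in A0 by move: IG; rewrite inE => /andP[].
  have := mem I IA; rewrite [I \in B]inE IG /= => m.
  case: (ltP 0 (c I)) => cI.
    by apply: mulr_ge0; rewrite ?ltW ?ltr0q // m.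
  by apply: mulr_le0; [rewrite lerq0 | rewrite leNgt m -leNgt].
by rewrite -hc leNgt hneg.
Qed.

Lemma Fpat_card_lt : (1 < n)%N -> (#|Fpat| < 2 ^ (n ^ 2 - n + 1))%N.
Proof.
move=> n1; apply: leq_ltn_trans (pajor Fpat) _.
apply: leq_ltn_trans (num_bound n1); rewrite -card_hyps -card_small.
apply: subset_leq_card; apply/fintype.subsetP => S /Sh_bound; by rewrite inE.
Qed.

Lemma Fpat_card_gt0 : (0 < #|Fpat|)%N.
Proof.
rewrite card_gt0; apply/set0Pn; exists (pat (const_mx 1)); apply/FpatP.
exists (const_mx 1); split => //.
move=> I /set0Pn [j jI]; rewrite -/(lin I _) /lin.
under eq_bigr do rewrite mxE.
by rewrite sumr_const -[_ *+ _]mulr_natl mulr1 pnatr_eq0 -lt0n card_gt0; apply/set0Pn; exists j.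
Qed.

Definition patC (C : set V) := pat (xget 0 C).

Lemma patC_comp x : A x -> patC (connected_component A x) = pat x.
Proof.
move=> Ax; rewrite /patC; apply: comp_pat.
apply: xgetPex; exists x; exact: connected_component_refl.
Qed.

Definition chidx (C : set V) : nat := index (patC C) (enum Fpat).

Lemma chambers_card : (@res_chambers R n #= [set k : nat | (k < #|Fpat|)%N])%card.
Proof.
apply/card_set_bijP; exists chidx; split.
- move=> _ [x Ax <-] /=; rewrite /chidx patC_comp // cardE index_mem mem_enum.
  by apply/FpatP; exists x.
- move=> _ _ /set_mem [x Ax <-] /set_mem [y Ay <-]; rewrite /chidx !patC_comp // => e.
  have pe : pat x = pat y.
    have mx : pat x \in enum Fpat by rewrite mem_enum; apply/FpatP; exists x.
    by rewrite -(nth_index finset.set0 mx) e nth_index // mem_enum; apply/FpatP; exists y.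
  by apply: same_connected_component; apply: seg_comp.
- move=> k /= kF.
  have kF' : (k < size (enum Fpat))%N by rewrite -cardE.
  have : nth finset.set0 (enum Fpat) k \in Fpat by rewrite -mem_enum mem_nth.
  case/FpatP => x [Ax px]; exists (connected_component A x); first by exists x.
  by rewrite /chidx patC_comp // px index_uniq // enum_uniq.
Qed.
End P2.

Theorem mainTheorem3 :
  (forall i n : nat, (1 <= i)%N -> (1 <= n)%N ->
     ((res_betti n i)%:R < (2 ^ (i * n))%:R / (i`!)%:R :> rat)%R) /\
  (forall (R : realType) (n : nat), (1 < n)%N ->
     exists Rn : nat,
       (@res_chambers R n #= [set k : nat | (k < Rn)%N])%card /\
       (ln (Rn%:R : R) / ln 2 < (n ^ 2 - n + 1)%:R)%R).
Proof.
split; first by move=> i n i1 _; exact: part1.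
move=> R n n1; exists #|@Fpat R n|; split; first exact: chambers_card.
have lt := @Fpat_card_lt R n n1; have gt := @Fpat_card_gt0 R n.
set N := #|Fpat R n| in lt gt *; set m := (n ^ 2 - n + 1)%N in lt *.
have l2 : (0 : R) < ln 2 by apply: ln_gt0; rewrite ltr1n.
rewrite ltr_pdivrMr // mulr_natl -lnXn ?ltr0n //.
rewrite ltr_ln ?posrE ?ltr0n ?exprn_gt0 ?ltr0n //.
by rewrite -natrX ltr_nat.
Qed.
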